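(* Let \((G,k)\) be an instance of Vertex Cover. None of Reduction Rules 1, 2 and 3 applies to \((G,k)\) if and only if \(\mathrm{surplus}(G)\geq 2\).
   Context: All graphs are finite, undirected and simple. \(LPVC(G)\) is the LP: minimize \(\sum_v x_v\) subject to \(x_u+x_v\ge1\) for each edge \(\{u,v\}\) and \(0\le x_v\le1\). For \(X\subseteq V(G)\), \(N(X)\) is the set of vertices outside \(X\) adjacent to some vertex of \(X\); for an independent set \(Z\), \(\mathrm{surplus}(Z)=|N(Z)|-|Z|\); \(\mathrm{surplus}(G)\) is the minimum of \(\mathrm{surplus}(Z)\) over all nonempty independent sets \(Z\) of \(G\). Reduction Rule 1 applies iff the all-\(\frac12\) assignment is not the unique optimum solution of \(LPVC(G)\). Reduction Rule 2 applies iff Rule 1 does not apply and there is an independent set \(Z\) with \(\mathrm{surplus}(Z)=1\) such that \(N(Z)\) is not independent. Reduction Rule 3 applies iff neither Rule 1 nor Rule 2 applies and there is an independent set \(Z\) with \(\mathrm{surplus}(Z)=1\) such that \(N(Z)\) is independent. *)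

(* Defs.v *)
From mathcomp Require Import all_boot all_order all_algebra.
Set Implicit Arguments. Unset Strict Implicit. Unset Printing Implicit Defensive.
Import Order.TTheory GRing.Theory Num.Theory.
Local Open Scope ring_scope.

(* A finite simple graph is a vertex type T : finType with an adjacency
   relation e : rel T, assumed symmetric and irreflexive in the theorem. *)
Section Defs.
Variable T : finType.
Variable e : rel T.

Definition independent (Z : {set T}) : bool :=
  [forall x in Z, forall y in Z, ~~ e x y].

Definition nbh (X : {set T}) : {set T} :=
  [set y | (y \notin X) && [exists x in X, e x y]].

Definition surplus (Z : {set T}) : int := (#|nbh Z|%:Z - #|Z|%:Z)%R.

(* surplus(G) >= k, where surplus(G) is the minimum of surplus(Z) over all
   nonempty independent sets Z (minimum over the empty family = +infinity). *)
Definition surplusG_ge (k : int) : Prop :=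
  forall Z : {set T}, Z != set0 -> independent Z -> k <= surplus Z.

Variable R : realFieldType.

Definition lpvc_feasible (x : T -> R) : Prop :=
  (forall u v, e u v -> 1 <= x u + x v) /\ (forall v, 0 <= x v <= 1).

Definition lpvc_value (x : T -> R) : R := \sum_(v : T) x v.

Definition lpvc_optimal (x : T -> R) : Prop :=
  lpvc_feasible x /\ forall y, lpvc_feasible y -> lpvc_value x <= lpvc_value y.

Definition all_half : T -> R := fun _ => 2^-1.

Definition half_unique_optimum : Prop :=
  lpvc_optimal all_half /\
  forall x, lpvc_optimal x -> forall v, x v = all_half v.

(* (G,k) instance of Vertex Cover; k does not influence the rules. *)
Definition rule1_applies (k : nat) : Prop := ~ half_unique_optimum.

Definition rule2_applies (k : nat) : Prop :=
  ~ rule1_applies k /\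
  exists Z : {set T}, [/\ independent Z, surplus Z = 1 & ~~ independent (nbh Z)].

Definition rule3_applies (k : nat) : Prop :=
  ~ rule1_applies k /\ ~ rule2_applies k /\
  exists Z : {set T}, [/\ independent Z, surplus Z = 1 & independent (nbh Z)].

End Defs.

(* Main.v *)
Set Warnings "-notation-overridden,-ambiguous-paths".
Require Import Defs.
From mathcomp Require Import all_boot all_order all_algebra.
From mathcomp Require Import zify ring lra.
From Stdlib Require Import Classical.
Import Order.TTheory GRing.Theory Num.Theory.
Local Open Scope ring_scope.
Set Implicit Arguments. Unset Strict Implicit.

Lemma exmax (R : realFieldType) (T : finType) (P : pred T) (F : T -> R) w0 :
  P w0 -> exists w, P w /\ forall j, P j -> F j <= F w.
Proof.
move=> Pw0; case: (@arg_maxP _ R T w0 P F Pw0) => w Pw Hw.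
by exists w; split.
Qed.

Lemma sum_ind (R : realFieldType) (T : finType) (A : {set T}) :
  \sum_(v : T) ((v \in A)%:R : R) = #|A|%:R.
Proof.
rewrite (eq_bigr (fun v => if v \in A then 1 else 0)); last by move=> v _; case: (v \in A).
by rewrite -big_mkcond sumr_const.
Qed.

Lemma absE (R : realFieldType) (x : R) : `|x| = x \/ `|x| = - x.
Proof. by case: (lerP 0 x) => h; [left; rewrite ger0_norm | right; rewrite ltr0_norm]. Qed.

Lemma pos_sum (R : realFieldType) (T : finType) (e : rel T)
 (Hs : forall Z : {set T}, Z != set0 -> independent e Z -> (#|Z| < #|nbh e Z|)%N) :
 forall n (s : seq R) (d : T -> R), (size s <= n)%N ->
 (forall v, d v != 0 -> `|d v| \in s) ->
 (forall u v, e u v -> 0 <= d u + d v) ->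
 (exists v, d v != 0) -> 0 < \sum_v d v.
Proof.
elim=> [|n IH] s d.
  by rewrite leqn0 => /nilP -> Hl _ [v /Hl]; rewrite in_nil.
move=> Hsz Hl Hf [v0 Hv0].
have [w [_ Hw]] := @exmax R T (fun _ => true) (fun v => `|d v|) v0 isT.
have Hmax : forall v, `|d v| <= `|d w| := fun v => Hw v isT.
move: Hmax; move Ha : `|d w| => a Hmax.
have a0 : 0 < a by apply: lt_le_trans (Hmax v0); rewrite normr_gt0.
have Hwa : d w != 0 by rewrite -normr_gt0 Ha.
have aS : a \in s by rewrite -Ha; apply: Hl.
have Ma : forall v, - a <= d v /\ d v <= a.
  by move=> v; have := Hmax v; rewrite ler_norml => /andP.
have [b [b0 ba Hb Hbs]] : exists b, [/\ 0 <= b, b < a,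
    (forall v, `|d v| < a -> `|d v| <= b) & (b = 0 \/ b \in filter (predC1 a) s)].
  case: (boolP [exists v, (0 < `|d v|) && (`|d v| < a)]).
    case/existsP => w0 /andP [p0 pa].
    have [w1 [Pw1 Hw1]] := @exmax R T (fun v => `|d v| < a) (fun v => `|d v|) w0 pa.
    exists `|d w1|; split => //; right.
    rewrite mem_filter /= lt_eqF //=; apply: Hl.
    by rewrite -normr_gt0; apply: lt_le_trans p0 (Hw1 _ pa).
  move/existsPn => H; exists 0; split => //; last by left.
  by move=> v va; have := H v; rewrite va andbT -leNgt.
have Hb' : forall v, d v != a -> d v != - a -> - b <= d v /\ d v <= b.
  move=> v n1 n2; apply/andP; rewrite -ler_norml; apply: Hb.
  rewrite lt_neqAle Hmax andbT; apply/eqP => h.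
  case: (absE (d v)) => h'.
    by move/eqP: n1; apply; rewrite -h h'.
  by move/eqP: n2; apply; rewrite -h h' opprK.
pose y := fun v => if d v == a then b else if d v == - a then - b else d v.
have Hc : forall v, [\/ d v = a /\ y v = b, d v = - a /\ y v = - b |
                       (- b <= d v /\ d v <= b) /\ y v = d v].
  move=> v; rewrite /y; case: eqP => h1; first by constructor 1.
  case: eqP => h2; first by constructor 2.
  by constructor 3; split => //; apply: Hb'; apply/eqP.
have Hfy : forall u v, e u v -> 0 <= y u + y v.
  move=> u v euv; have := Hf u v euv; have := Ma u; have := Ma v.
  by case: (Hc u) => [[? ->]|[? ->]|[[? ?] ->]];
     case: (Hc v) => [[? ->]|[? ->]|[[? ?] ->]]; lra.
pose U := [set v | d v == a]; pose L := [set v | d v == - a].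
have aNa : (a == - a) = false.
  by apply/negbTE; apply/eqP => h; lra.
have Hdiff : \sum_v d v - \sum_v y v = (a - b) * (#|U|%:R - #|L|%:R).
  rewrite -sumrB -!sum_ind -sumrB mulr_sumr; apply: eq_bigr => v _.
  rewrite /y !inE; case: eqP => [->|h1]; first by rewrite aNa /=; ring.
  case: eqP => [->|h2]; first by rewrite /=; ring.
  by rewrite /=; ring.
have HUL : (#|L| < #|U|)%N.
  case: (set_0Vmem L) => [L0 | [x xL]].
    rewrite L0 cards0 card_gt0; apply/set0Pn; exists w; rewrite inE.
    case: (absE (d w)) => h; first by rewrite -Ha h.
    have : w \in L by rewrite inE -Ha h opprK.
    by rewrite L0 inE.
  have Lne : L != set0 by apply/set0Pn; exists x.
  have Lind : independent e L.
    apply/forallP => u; apply/implyP => uL; apply/forallP => v; apply/implyP => vL.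
    apply/negP => euv; have := Hf u v euv.
    by move: uL vL; rewrite !inE => /eqP -> /eqP ->; lra.
  have sub : nbh e L \subset U.
    apply/subsetP => u; rewrite !inE => /andP [uL /existsP [v /andP [vL evu]]].
    have := Hf v u evu; move: vL; rewrite inE => /eqP ->.
    by have := Ma u; move=> [h1 h2] h3; apply/eqP; lra.
  exact: leq_trans (Hs _ Lne Lind) (subset_leq_card sub).
have Hsd : \sum_v y v < \sum_v d v.
  rewrite -subr_gt0 Hdiff mulr_gt0 //; first by rewrite subr_gt0.
  by rewrite subr_gt0 ltr_nat.
case: (boolP [exists v, y v != 0]).
  case/existsP => v1 hv1.
  apply: lt_trans Hsd; apply: (IH (filter (predC1 a) s)).
  - have h1 := count_predC (predC1 a) s.
    have h2 : (0 < count (predC (predC1 a)) s)%N.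
      by rewrite -has_count; apply/hasP; exists a => //=; rewrite eqxx.
    rewrite size_filter -ltnS (leq_trans _ Hsz) // -h1 -[X in (X < _)%N]addn0 ltn_add2l; exact: h2.
  - move=> v hv; rewrite mem_filter /=.
    case: (Hc v) => [[h1 h2]|[h1 h2]|[[h1 h2] h3]].
    + rewrite h2 ger0_norm //; case: Hbs => [bz|bz]; last by rewrite mem_filter in bz.
      by move: hv; rewrite h2 bz eqxx.
    + rewrite h2 normrN ger0_norm //; case: Hbs => [bz|bz]; last by rewrite mem_filter in bz.
      by move: hv; rewrite h2 bz oppr0 eqxx.
    + rewrite h3 in hv *; rewrite Hl // andbT; apply/eqP => h.
      by case: (absE (d v)) => h'; lra.
  - exact: Hfy.
  - by exists v1.
move/existsPn => H.
rewrite (@big1 _ _ _ _ _ _ y) in Hsd => //.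
by move=> v _; have := H v; rewrite negbK => /eqP.
Qed.

Lemma huo_of (R : realFieldType) (T : finType) (e : rel T)
 (Hs : forall Z : {set T}, Z != set0 -> independent e Z -> (#|Z| < #|nbh e Z|)%N) :
 half_unique_optimum e R.
Proof.
have feas : lpvc_feasible e (@all_half T R).
  by split => [u v _|v]; rewrite /all_half; [lra | apply/andP; split; lra].
have key : forall x, lpvc_feasible e x -> (exists v, x v != 2^-1) ->
    lpvc_value (@all_half T R) < lpvc_value x.
  move=> x [Hx1 Hx2] [v Hv].
  rewrite -subr_gt0 /lpvc_value -sumrB.
  apply: (@pos_sum R T e Hs _ [seq `|x v - 2^-1| | v <- enum T] _ (leqnn _)).
  - by move=> u _; apply: map_f; rewrite mem_enum.
  - by move=> u w euw; have := Hx1 u w euw; rewrite /all_half /=; lra.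
  - by exists v; rewrite subr_eq0.
have le : forall x, lpvc_feasible e x -> lpvc_value (@all_half T R) <= lpvc_value x.
  move=> x fx; case: (boolP [exists v, x v != 2^-1]).
    by case/existsP => v hv; apply/ltW/key => //; exists v.
  move/existsPn => H; rewrite le_eqVlt; apply/orP; left; apply/eqP.
  by apply: eq_bigr => v _; have := H v; rewrite negbK => /eqP ->.
split; first by split.
move=> x [fx opt] v; case: (eqVneq (x v) 2^-1) => // hv.
have := key x fx (ex_intro _ v hv); have := opt _ feas.
by move=> h1 h2; exfalso; move: (lt_le_trans h2 h1); rewrite ltxx.
Qed.

Lemma surplus_of (R : realFieldType) (T : finType) (e : rel T) (e_sym : symmetric e) :
 half_unique_optimum e R ->
 forall Z : {set T}, Z != set0 -> independent e Z -> (#|Z| < #|nbh e Z|)%N.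
Proof.
move=> [[feash opt] uniq] Z Zne Zind.
rewrite ltnNge; apply/negP => HN.
pose x := fun v => if v \in Z then 0 else if v \in nbh e Z then 1 else (2^-1 : R).
have nZ : forall v, v \in Z -> v \notin nbh e Z.
  by move=> v vZ; rewrite inE vZ.
have fx : lpvc_feasible e x.
  split => [u v euv|v]; last first.
    by rewrite /x; case: (v \in Z); [|case: (v \in nbh e Z)]; apply/andP; split; lra.
  have inN : forall a b, a \in Z -> e a b -> b \in nbh e Z.
    move=> a b aZ eab; rewrite inE; apply/andP; split; last by apply/existsP; exists a; rewrite aZ.
    apply/negP => bZ; move/forallP: Zind => /(_ a); rewrite aZ /= => /forallP /(_ b).
    by rewrite bZ eab.
  rewrite /x; case: (boolP (u \in Z)) => uZ.
    have vN := inN _ _ uZ euv.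
    have vZ : v \notin Z by apply/negP => vZ; move: (nZ _ vZ); rewrite vN.
    by rewrite vN (negbTE vZ); lra.
  case: (boolP (v \in Z)) => vZ.
    by rewrite (inN v u vZ) //; [lra | rewrite e_sym].
  by case: (u \in nbh e Z); case: (v \in nbh e Z); lra.
have vx : lpvc_value x <= lpvc_value (@all_half T R).
  rewrite /lpvc_value /all_half.
  rewrite (eq_bigr (fun v => 2^-1 + 2^-1 * ((v \in nbh e Z)%:R - (v \in Z)%:R))); last first.
    move=> v _; rewrite /x; case: (boolP (v \in Z)) => vZ.
      by rewrite (negbTE (nZ _ vZ)) /=; lra.
    by case: (v \in nbh e Z) => /=; lra.
  rewrite big_split /= -mulr_sumr sumrB !sum_ind gerDl.
  apply: mulr_ge0_le0; first lra.
  by rewrite subr_le0 ler_nat.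
have ox : lpvc_optimal e x.
  by split => // y fy; apply: le_trans vx (opt _ fy).
case/set0Pn: Zne => v vZ.
have := uniq x ox v; rewrite /x vZ /all_half => h; lra.
Qed.

Theorem lemma10 (R : realFieldType) (T : finType) (e : rel T)
  (e_sym : symmetric e) (e_irr : irreflexive e) (k : nat) :
  (~ rule1_applies e R k /\ ~ rule2_applies e R k /\ ~ rule3_applies e R k)
  <-> surplusG_ge e 2.
Proof.
split.
  move=> [n1 [n2 n3]].
  have HP : half_unique_optimum e R.
    by apply: NNPP.
  move=> Z Zne Zind; have h := surplus_of e_sym HP Zne Zind.
  rewrite /surplus.
  case: (ltnP (#|Z|.+1) #|nbh e Z|) => h2; first lia.
  have s1 : surplus e Z = 1 by rewrite /surplus; lia.
  exfalso; case: (boolP (independent e (nbh e Z))) => hi.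
    by apply: n3; split => //; split => //; exists Z.
  by apply: n2; split => //; exists Z.
move=> H2.
have S1 : forall Z : {set T}, Z != set0 -> independent e Z -> (#|Z| < #|nbh e Z|)%N.
  by move=> Z Zne Zind; have := H2 Z Zne Zind; rewrite /surplus; lia.
have HP := @huo_of R T e S1.
have nz : forall Z : {set T}, independent e Z -> surplus e Z = 1 -> False.
  move=> Z Zi Zs; case: (eqVneq Z set0) => [Z0|Zne].
    have c0 : #|nbh e Z| = 0%N.
      apply/eqP; rewrite cards_eq0; apply/eqP/setP => y; rewrite !inE.
      by apply/negP => /andP [_ /existsP [x]]; rewrite Z0 inE.
    by move: Zs; rewrite /surplus c0 Z0 cards0.
  by have := H2 Z Zne Zi; rewrite Zs.
split; first by move=> h; apply: h.
split; first by move=> [_ [Z [Zi Zs _]]]; apply: (nz Z).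
by move=> [_ [_ [Z [Zi Zs _]]]]; apply: (nz Z).
Qed.
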